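(* Let $X$ and $Y$ be Tychonoff spaces and let $f\colon X\to Y$ be a quotient map of $X$ onto $Y$. If $X$ is a weakly Grothendieck space, then $Y$ is a weakly Grothendieck space.
   Context: For a Tychonoff space $X$, $C_p(X)$ denotes the space of all continuous real-valued functions on $X$ with the topology of pointwise convergence. A subset $A$ of a space $Z$ is countably compact in $Z$ if every infinite subset of $A$ has an accumulation point in $Z$. A space $Z$ is a $g$-space if for every subset $A\subseteq Z$ that is countably compact in $Z$, the closure of $A$ in $Z$ is compact. A Tychonoff space $X$ is weakly Grothendieck if $C_p(X)$ is a $g$-space, and Grothendieck if every subspace of $C_p(X)$ is a $g$-space. *)

(* Defs.v *)
From mathcomp Require Import all_boot all_order all_algebra.
From mathcomp Require Import all_classical all_reals all_analysis.
Set Implicit Arguments. Unset Strict Implicit. Unset Printing Implicit Defensive.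
Import Order.TTheory GRing.Theory Num.Theory numFieldNormedType.Exports.
Local Open Scope classical_set_scope.
Local Open Scope ring_scope.

Definition tychonoff_space (R : realType) (T : topologicalType) : Prop :=
  accessible_space T /\
  forall (a : T) (B : set T), closed B -> ~ B a ->
    exists f : T -> R, [/\ continuous f, f a = 0 & forall b, B b -> f b = 1].

Definition quotient_map (X Y : topologicalType) (f : X -> Y) : Prop :=
  [/\ (forall y : Y, exists x : X, f x = y), continuous f &
      forall U : set Y, open (f @^-1` U) -> open U].

(* The underlying set of C_p(X) inside the space of all functions with the
   topology of pointwise convergence; C_p(X) carries the subspace topology. *)
Definition Cp (R : realType) (X : topologicalType) : set {ptws X -> R} :=
  [set f | continuous (f : X -> R)].

(* For a subspace S of a space Z (S viewed with the subspace topology):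
   A is countably compact in S iff every infinite subset of A has an
   accumulation point in S.  (Accumulation points in S of subsets of S are
   exactly the points of S that are accumulation points in Z.) *)
Definition countably_compact_in (Z : topologicalType) (S A : set Z) : Prop :=
  forall B : set Z, B `<=` A -> infinite_set B ->
    exists z, S z /\ limit_point B z.

(* The subspace S of Z is a g-space: for every A contained in S which is
   countably compact in S, the closure of A in S (= closure A `&` S) is
   compact. *)
Definition g_space (Z : topologicalType) (S : set Z) : Prop :=
  forall A : set Z, A `<=` S -> countably_compact_in S A ->
    compact (closure A `&` S).

Definition weakly_Grothendieck (R : realType) (X : topologicalType) : Prop :=
  g_space (@Cp R X).
Arguments tychonoff_space : clear implicits.
Arguments weakly_Grothendieck : clear implicits.
Arguments Cp : clear implicits.

(* Main.v *)
Require Import Defs.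
From mathcomp Require Import all_boot all_order all_algebra.
From mathcomp Require Import all_classical all_reals all_analysis.
Import Order.TTheory GRing.Theory Num.Theory numFieldNormedType.Exports.
Local Open Scope classical_set_scope.
Local Open Scope ring_scope.

Lemma ptws_cont (R : realType) (Z X : topologicalType) (h : Z -> {ptws X -> R}) :
  (forall x, continuous (fun z => h z x)) -> continuous h.
Proof.
move=> hc z.
apply/(@pointwise_cvgP X R (h @ z) (h z) _) => t.
exact: hc.
Qed.

Lemma ptws_eval (R : realType) (X : topologicalType) (x : X) :
  continuous (fun g : {ptws X -> R} => g x).
Proof. exact: (@proj_continuous X (fun _ => R) x). Qed.

Lemma ptws_diff (R : realType) (X : topologicalType) (x1 x2 : X) :
  continuous (fun g : {ptws X -> R} => g x1 - g x2).
Proof.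
move=> k.
have h1 := @ptws_eval R X x1 k. have h2 := @ptws_eval R X x2 k.
exact: (cvgB h1 h2).
Qed.

Theorem lemma2 (R : realType) (X Y : topologicalType) (f : X -> Y) :
  tychonoff_space R X -> tychonoff_space R Y -> quotient_map f ->
  weakly_Grothendieck R X -> weakly_Grothendieck R Y.
Proof.
move=> _ _ [fsurj fcont fquot] WG A ACp Acc.
pose s y := projT1 (cid (fsurj y)).
have fsK : forall y, f (s y) = y by move=> y; rewrite /s; case: cid.
pose phi (g : {ptws Y -> R}) : {ptws X -> R} := g \o f.
pose psi (h : {ptws X -> R}) : {ptws Y -> R} := h \o s.
have phic : continuous phi.
  by apply: ptws_cont => x; exact: ptws_eval.
have psic : continuous psi.
  by apply: ptws_cont => x; exact: ptws_eval.
have psiphi : forall g, psi (phi g) = g.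
  by move=> g; apply/funext => y; rewrite /psi /phi /= fsK.
have phiinj : injective phi by exact: (can_inj psiphi).
pose A' := phi @` A.
have A'Cp : A' `<=` Cp R X.
  move=> _ [a Aa <-]; rewrite /Cp /= => x.
  exact: (continuous_comp (fcont x) (ACp a Aa (f x))).
have A'cc : countably_compact_in (Cp R X) A'.
  move=> B BA' Binf.
  pose B0 := A `&` phi @^-1` B.
  have B0inf : infinite_set B0.
    move=> /(finite_image phi) fin; apply: Binf; apply: sub_finite_set fin.
    move=> b Bb; have [a Aa ab] := BA' b Bb; exists a => //.
    by split => //; rewrite /= ab.
  have [z [Cz lz]] := Acc B0 (@subIsetl _ _ _) B0inf.
  exists (phi z); split.
    rewrite /Cp /= => x; exact: (continuous_comp (fcont x) (Cz (f x))).
  move=> U /phic nU.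
  have [y [yz [_ By] Uy]] := lz _ nU.
  exists (phi y); split => //.
  by apply: contra yz => /eqP /phiinj ->.
have K := WG A' A'Cp A'cc.
suff -> : closure A `&` Cp R Y = psi @` (closure A' `&` Cp R X).
  by apply: continuous_compact => //; apply: continuous_subspaceT.
apply/seteqP; split.
- move=> g [clg cg]; exists (phi g); last exact: psiphi.
  split.
    move=> U /phic nU; have [a [Aa Ua]] := clg _ nU.
    by exists (phi a); split => //; exists a.
  rewrite /Cp /= => x; exact: (continuous_comp (fcont x) (cg (f x))).
- move=> _ [h [clh ch] <-].
  have fib : forall x1 x2, f x1 = f x2 -> h x1 = h x2.
    move=> x1 x2 e.
    pose d (k : {ptws X -> R}) := k x1 - k x2.
    have dc : continuous d := @ptws_diff R X x1 x2.
    have Cc : closed (d @^-1` [set x | x = 0]).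
      by apply: preimage_closed; [move=> k _; exact: dc | exact: closed_eq].
    have : (d @^-1` [set x | x = 0]) h.
      move/closure_id: Cc => ->; apply: (closureS _) clh.
      by move=> _ [a Aa <-]; rewrite /d /= /phi /= e subrr.
    by rewrite /d /= => /eqP; rewrite subr_eq0 => /eqP.
  have hE : h = phi (psi h).
    by apply/funext => x; rewrite /phi /psi /=; apply: fib; rewrite fsK.
  split.
    move=> U /psic nU; have [k [[a Aa <-] Uk]] := clh _ nU.
    by exists a; split => //; move: Uk; rewrite /= psiphi.
  apply/continuousP => U oU; apply: fquot.
  have -> : f @^-1` (psi h @^-1` U) = h @^-1` U.
    by rewrite {2}hE.
  by move/continuousP: ch; apply.
Qed.
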